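(* Let $L$ be a Latin square of order $n$ and let $\sigma=(\alpha,\beta,\gamma;(12))$ be an autoparatopism of $L$. Suppose $(i,j,k)\in O(L)$, and let $a=o_{\alpha\beta}(i)$, $b=o_{\beta\alpha}(j)$ and $c=o_\gamma(k)$. Then $$\operatorname{lcm}(2a,2b)=\operatorname{lcm}(2a,c)=\operatorname{lcm}(2b,c)=\operatorname{lcm}(2a,2b,c).$$
   Context: A Latin square $L$ of order $n$ is an $n\times n$ array with rows, columns and symbols indexed by $[n]=\{1,\dots,n\}$, in which each symbol occurs exactly once in each row and each column. Its set of triples is $O(L)=\{(i,j,L(i,j)):i,j\in[n]\}$. Permutations in $\mathcal S_n$ act on the right, and products are composed left to right: $i(\alpha\beta)=(i\alpha)\beta$. A paratopism is $\sigma=(\alpha,\beta,\gamma;\delta)$ with $\alpha,\beta,\gamma\in\mathcal S_n$ and $\delta\in\mathcal S_3$. It maps $L$ to the Latin square $L^\sigma$ whose triple set is obtained by replacing each triple $(x,y,z)\in O(L)$ with $(x\alpha,y\beta,z\gamma)$ and then permuting the three coordinates according to $\delta$. In particular, for $\delta=(12)$ the triple $(x,y,z)$ maps to $(y\beta,x\alpha,z\gamma)$. $\sigma$ is an autoparatopism of $L$ if $L^\sigma=L$. For a permutation $\pi$ and a point $i$, $o_\pi(i)$ denotes the length of the cycle of $\pi$ containing $i$; fixed points count as cycles of length $1$. *)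

(* Defs.v *)
From mathcomp Require Import all_boot all_fingroup.
Set Implicit Arguments. Unset Strict Implicit. Unset Printing Implicit Defensive.

(* Points, rows, columns, symbols: 'I_n (i.e. [n] shifted to 0..n-1). *)

Definition array (n : nat) := 'I_n -> 'I_n -> 'I_n.

Definition is_latin_square (n : nat) (L : array n) : Prop :=
  (forall (i k : 'I_n), #|[set j | L i j == k]| = 1) /\
  (forall (j k : 'I_n), #|[set i | L i j == k]| = 1).

Definition triples (n : nat) (L : array n) : {set 'I_n * 'I_n * 'I_n} :=
  [set (i, j, L i j) | i : 'I_n, j : 'I_n].

Definition para12 (n : nat) (a b g : {perm 'I_n}) (t : 'I_n * 'I_n * 'I_n)
  : 'I_n * 'I_n * 'I_n :=
  let: (x, y, z) := t in (b y, a x, g z).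

Definition is_autoparatopism12 (n : nat) (L : array n) (a b g : {perm 'I_n}) : Prop :=
  [set para12 a b g t | t in triples L] = triples L.

Definition cyc_len (n : nat) (p : {perm 'I_n}) (i : 'I_n) : nat := #|porbit p i|.

(* Main.v *)
Require Import Defs.
From mathcomp Require Import all_boot all_fingroup.

Lemma iter_cyc (n : nat) (s : {perm 'I_n}) x m :
  (iter m s x == x) = (#|porbit s x| %| m).
Proof.
set c := #|porbit s x|.
have Hc : iter c s x = x by exact: iter_porbit.
have cpos : 0 < c by rewrite lt0n card_porbit_neq0.
have iterq : forall q, iter (q * c) s x = x.
  by elim=> [|q IH] //; rewrite mulSn iterD IH Hc.
rewrite {1}(divn_eq m c) addnC iterD iterq.
apply/eqP/idP => [H|H]; last by rewrite /dvdn in H; rewrite (eqP H).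
have Hu := uniq_traject_porbit s x.
have r_lt : m %% c < c by rewrite ltn_mod.
have s1 : m %% c < size (traject s x c) by rewrite size_traject.
have s2 : 0 < size (traject s x c) by rewrite size_traject.
have E := nth_uniq x s1 s2 Hu.
move: E; rewrite (nth_traject _ r_lt) (nth_traject _ cpos) /= H eqxx.
by move=> E; rewrite /dvdn -E.
Qed.

Lemma card1_eq (T : finType) (P : pred T) y1 y2 :
  #|[set y | P y]| = 1 -> P y1 -> P y2 -> y1 = y2.
Proof.
move=> /eqP /cards1P [z Hz] H1 H2.
have : y1 \in [set y | P y] by rewrite inE.
have : y2 \in [set y | P y] by rewrite inE.
by rewrite Hz !inE => /eqP -> /eqP ->.
Qed.

Theorem lemma3p2 (n : nat) (L : array n) (a b g : {perm 'I_n}) (i j k : 'I_n) :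
  is_latin_square L ->
  is_autoparatopism12 L a b g ->
  (i, j, k) \in triples L ->
  let A := cyc_len (a * b)%g i in
  let B := cyc_len (b * a)%g j in
  let C := cyc_len g k in
  [/\ lcmn (2 * A) (2 * B) = lcmn (lcmn (2 * A) (2 * B)) C,
      lcmn (2 * A) C = lcmn (lcmn (2 * A) (2 * B)) C &
      lcmn (2 * B) C = lcmn (lcmn (2 * A) (2 * B)) C].
Proof.
move=> [Hrow Hcol] Hauto Hijk A B C.
have rowinj : forall x y1 y2, L x y1 = L x y2 -> y1 = y2.
  move=> x y1 y2 E; apply: (@card1_eq _ (fun y => L x y == L x y1) _ _ (Hrow _ _)) => //.
  by rewrite E.
have colinj : forall y x1 x2, L x1 y = L x2 y -> x1 = x2.
  move=> y x1 x2 E; apply: (@card1_eq _ (fun x => L x y == L x1 y) _ _ (Hcol _ _)) => //.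
  by rewrite E.
have Hstep : forall x y, L (b y) (a x) = g (L x y).
  move=> x y.
  have : para12 a b g (x, y, L x y) \in triples L.
    by rewrite -Hauto; apply: imset_f; apply/imset2P; exists x y.
  by case/imset2P=> x' y' _ _ [-> -> ->].
have Hiter : forall m x y,
    L (iter m (a * b)%g x) (iter m (b * a)%g y) = iter (2 * m) g (L x y).
  elim=> [|m IH] x y; first by [].
  rewrite [in RHS]mulnS iterD /= !permM Hstep Hstep IH; done.
have Hk : k = L i j.
  by case/imset2P: Hijk => x y _ _ [-> -> ->].
have Ai : forall m, A %| m -> iter m (a * b)%g i = i.
  by move=> m Hm; apply/eqP; rewrite iter_cyc.
have Bj : forall m, B %| m -> iter m (b * a)%g j = j.
  by move=> m Hm; apply/eqP; rewrite iter_cyc.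
have Ck : forall m, C %| m -> iter m g k = k.
  by move=> m Hm; apply/eqP; rewrite iter_cyc.
have H1 : C %| lcmn (2 * A) (2 * B).
  rewrite -muln_lcmr -iter_cyc Hk -Hiter.
  by rewrite Ai ?dvdn_lcml // Bj ?dvdn_lcmr.
have H2 : 2 * B %| lcmn (2 * A) C.
  have e2 : 2 %| lcmn (2 * A) C by exact: (dvdn_trans (dvdn_mulr _ (dvdnn 2)) (dvdn_lcml _ _)).
  set l := lcmn (2 * A) C.
  have El : l = 2 * (l %/ 2) by rewrite mulnC divnK.
  rewrite El dvdn_pmul2l //.
  have hA : A %| l %/ 2 by rewrite -(@dvdn_pmul2l 2) // -El dvdn_lcml.
  have hC : C %| 2 * (l %/ 2) by rewrite -El dvdn_lcmr.
  rewrite -iter_cyc; apply/eqP; apply: (rowinj i).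
  have := Hiter (l %/ 2) i j; rewrite Ai // -Hk Ck // => ->; done.
have H3 : 2 * A %| lcmn (2 * B) C.
  have e2 : 2 %| lcmn (2 * B) C by exact: (dvdn_trans (dvdn_mulr _ (dvdnn 2)) (dvdn_lcml _ _)).
  set l := lcmn (2 * B) C.
  have El : l = 2 * (l %/ 2) by rewrite mulnC divnK.
  rewrite El dvdn_pmul2l //.
  have hB : B %| l %/ 2 by rewrite -(@dvdn_pmul2l 2) // -El dvdn_lcml.
  have hC : C %| 2 * (l %/ 2) by rewrite -El dvdn_lcmr.
  rewrite -iter_cyc; apply/eqP; apply: (colinj j).
  have := Hiter (l %/ 2) i j; rewrite Bj // -Hk Ck // => ->; done.
split.
- by apply/esym/lcmn_idPl.
- by rewrite lcmnAC; apply/esym/lcmn_idPl.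
- by rewrite (lcmnC (2 * A)) lcmnAC; apply/esym/lcmn_idPl.
Qed.
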